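(* For any pair of positive integers $r_1,r_2$, there exists a strongly connected digraph $G$ such that its inner out-radius is $r^+(G)=r_1$ and its inner in-radius is $r^-(G)=r_2$.
   Context: Digraphs are finite and may have loops and multiple arcs. $\mathrm{dist}_G(u,v)$ is the length of a shortest directed walk from $u$ to $v$ ($\infty$ if none). The inner out-eccentricity of $u$ is $\mathrm{ecc}^+(u)=\max\{\mathrm{dist}_G(u,v): \mathrm{dist}_G(u,v)<\infty\}$ and the inner in-eccentricity is $\mathrm{ecc}^-(u)=\max\{\mathrm{dist}_G(v,u): \mathrm{dist}_G(v,u)<\infty\}$ (maxima over $v\in V(G)$). The inner out-radius is $r^+(G)=\min_{u}\mathrm{ecc}^+(u)$ and the inner in-radius is $r^-(G)=\min_u \mathrm{ecc}^-(u)$. *)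

(* Defs.v *)
From mathcomp Require Import all_boot.
Set Implicit Arguments. Unset Strict Implicit. Unset Printing Implicit Defensive.

Record digraph := Digraph {
  dV : finType;
  dE : finType;
  dsrc : dE -> dV;
  dtgt : dE -> dV }.

Fixpoint is_walk (G : digraph) (u v : dV G) (s : seq (dE G)) : Prop :=
  match s with
  | [::] => u = v
  | e :: s' => dsrc e = u /\ is_walk (dtgt e) v s'
  end.

Definition walk_len (G : digraph) (u v : dV G) (k : nat) : Prop :=
  exists s : seq (dE G), size s = k /\ is_walk u v s.

Definition is_dist (G : digraph) (u v : dV G) (d : nat) : Prop :=
  walk_len u v d /\ forall k, walk_len u v k -> d <= k.

Definition ecc_out (G : digraph) (u : dV G) (e : nat) : Prop :=
  (exists v d, is_dist u v d /\ d = e) /\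
  (forall v d, is_dist u v d -> d <= e).

Definition ecc_in (G : digraph) (u : dV G) (e : nat) : Prop :=
  (exists v d, is_dist v u d /\ d = e) /\
  (forall v d, is_dist v u d -> d <= e).

Definition out_radius (G : digraph) (r : nat) : Prop :=
  (exists u : dV G, ecc_out u r) /\ (forall (u : dV G) e, ecc_out u e -> r <= e).

Definition in_radius (G : digraph) (r : nat) : Prop :=
  (exists u : dV G, ecc_in u r) /\ (forall (u : dV G) e, ecc_in u e -> r <= e).

Definition strongly_connected (G : digraph) : Prop :=
  forall u v : dV G, exists k, walk_len u v k.

(* Main.v *)
Require Import Defs.
From mathcomp Require Import all_boot.
From mathcomp Require Import zify.
From Stdlib Require Import Classical.
Set Implicit Arguments. Unset Strict Implicit. Unset Printing Implicit Defensive.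

Section Gen.
Variable V : finType.
Variable adj : rel V.

Definition mkG : digraph :=
  @Digraph V (prod V V) (fun e => e.1) (fun e => if adj e.1 e.2 then e.2 else e.1).

Definition step (x y : V) : bool := adj x y || (x == y).

Lemma step_e (e : V * V) : step e.1 (if adj e.1 e.2 then e.2 else e.1).
Proof. rewrite /step; case: ifP => H; rewrite ?H ?eqxx ?orbT //. Qed.

Lemma walk_pot (h : V -> nat) :
  (forall x y, step x y -> h y <= (h x).+1) ->
  forall (s : seq (dE mkG)) (u v : V), is_walk (G:=mkG) u v s -> h v <= h u + size s.
Proof.
move=> Hh; elim=> [|e s IH] u v /=; first by move=> ->; rewrite addn0.
case=> Hu Hw; have := IH _ _ Hw; have := Hh _ _ (step_e e).
rewrite /= in Hu; rewrite -Hu /= => H1 H2; rewrite addnS -addSn; exact: leq_trans H2 (leq_add H1 (leqnn _)).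
Qed.

Lemma walk_pot_in (h : V -> nat) :
  (forall x y, step x y -> h x <= (h y).+1) ->
  forall (s : seq (dE mkG)) (u v : V), is_walk (G:=mkG) u v s -> h u <= h v + size s.
Proof.
move=> Hh; elim=> [|e s IH] u v /=; first by move=> ->; rewrite addn0.
case=> Hu Hw; have := IH _ _ Hw; have := Hh _ _ (step_e e).
rewrite /= in Hu; rewrite -Hu /= => H1 H2; rewrite addnS; apply: (leq_trans H1); exact: H2.
Qed.

Fixpoint reach (k : nat) (u v : V) : Prop :=
  match k with
  | 0 => u = v
  | k'.+1 => exists w, step u w /\ reach k' w v
  end.

Lemma reach_walk k : forall u v, reach k u v -> walk_len (G:=mkG) u v k.
Proof.
elim: k => [|k IH] u v /=; first by move=> ->; exists [::].
case=> w [Hs Hr]; case: (IH _ _ Hr) => s [Hsz Hw].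
exists ((u, w) :: s); split; first by rewrite /= Hsz.
split=> //=.
suff -> : (if adj u w then w else u) = w by [].
case: ifP => // Ha; move: Hs; rewrite /step Ha /= => /eqP.
done.
Qed.

Lemma reach_cat k l u w v : reach k u w -> reach l w v -> reach (k + l) u v.
Proof.
elim: k u => [|k IH] u /=; first by move=> ->.
case=> x [Hs Hr] Hl; exists x; split=> //; exact: IH.
Qed.

Lemma reach_snoc k u w v : reach k u w -> step w v -> reach k.+1 u v.
Proof.
move=> H Hs; rewrite -addn1; apply: (reach_cat H); exists v; split=> //.
Qed.

Lemma exists_dist (u v : V) k : walk_len (G:=mkG) u v k -> exists d, is_dist (G:=mkG) u v d.
Proof.
elim: k {-2}k (leqnn k) => [|n IH] k Hk Hw.
  exists k; split=> // j _; move: Hk; lia.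
case: (classic (forall j, walk_len (G:=mkG) u v j -> k <= j)) => H.
  by exists k.
case: (not_all_ex_not _ _ H) => j Hj.
have [Hwj Hjk] : walk_len (G:=mkG) u v j /\ j < k.
  case: (classic (walk_len (G:=mkG) u v j)) => Hw'.
    split=> //; rewrite ltnNge; apply/negP => Hle; apply: Hj => _; done.
  by exfalso; apply: Hj.
apply: (IH j) => //; move: Hk Hjk; lia.
Qed.

Lemma walk_lower (u v : V) r :
  (forall s : seq (dE mkG), is_walk (G:=mkG) u v s -> r <= size s) ->
  forall k, walk_len (G:=mkG) u v k -> r <= k.
Proof. by move=> H k [s [<- Hw]]; apply: H. Qed.

Lemma out_radius_of (r : nat) (c : V) :
  (forall v, exists k, k <= r /\ reach k c v) ->
  (forall u, exists v, (exists k, reach k u v) /\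
      forall s : seq (dE mkG), is_walk (G:=mkG) u v s -> r <= size s) ->
  out_radius mkG r.
Proof.
move=> Hup Hlow.
have ub : forall v d, is_dist (G:=mkG) c v d -> d <= r.
  move=> v d [_ Hm]; case: (Hup v) => k [Hk Hr].
  exact: leq_trans (Hm _ (reach_walk Hr)) Hk.
split.
  exists c; split=> //.
  case: (Hlow c) => v [[k Hr] Hl].
  case: (exists_dist (reach_walk Hr)) => d Hd.
  exists v, d; split=> //; apply/eqP; rewrite eqn_leq (ub _ _ Hd) /=.
  case: Hd => [Hw _]; exact: walk_lower Hl _ Hw.
move=> u e [_ He].
case: (Hlow u) => v [[k Hr] Hl].
case: (exists_dist (reach_walk Hr)) => d Hd.
apply: leq_trans (He _ _ Hd).
case: Hd => [Hw _]; exact: walk_lower Hl _ Hw.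
Qed.

Lemma in_radius_of (r : nat) (c : V) :
  (forall v, exists k, k <= r /\ reach k v c) ->
  (forall u, exists v, (exists k, reach k v u) /\
      forall s : seq (dE mkG), is_walk (G:=mkG) v u s -> r <= size s) ->
  in_radius mkG r.
Proof.
move=> Hup Hlow.
have ub : forall v d, is_dist (G:=mkG) v c d -> d <= r.
  move=> v d [_ Hm]; case: (Hup v) => k [Hk Hr].
  exact: leq_trans (Hm _ (reach_walk Hr)) Hk.
split.
  exists c; split=> //.
  case: (Hlow c) => v [[k Hr] Hl].
  case: (exists_dist (reach_walk Hr)) => d Hd.
  exists v, d; split=> //; apply/eqP; rewrite eqn_leq (ub _ _ Hd) /=.
  case: Hd => [Hw _]; exact: walk_lower Hl _ Hw.
move=> u e [_ He].
case: (Hlow u) => v [[k Hr] Hl].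
case: (exists_dist (reach_walk Hr)) => d Hd.
apply: leq_trans (He _ _ Hd).
case: Hd => [Hw _]; exact: walk_lower Hl _ Hw.
Qed.

Lemma sc_of (c : V) :
  (forall v, exists k, reach k c v) -> (forall v, exists k, reach k v c) ->
  strongly_connected mkG.
Proof.
move=> H1 H2 u v; case: (H2 u) => k Hk; case: (H1 v) => l Hl.
exists (k + l); apply: reach_walk; exact: reach_cat Hk Hl.
Qed.

End Gen.

Section Conc.
Variables r1 r2 : nat.
Hypothesis H1 : 0 < r1.
Hypothesis H2 : 0 < r2.

Definition Vt : finType := option ((bool * 'I_r1) + (bool * 'I_r2))%type.

Definition adjc (x y : Vt) : bool :=
  match x, y with
  | None, Some (inl (_, i)) => val i == 0
  | None, Some (inr _) => true
  | Some (inl (b, i)), Some (inl (b', j)) => (b == b') && (val j == (val i).+1)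
  | Some (inl _), None => true
  | Some (inr (b, j)), Some (inr (b', i)) => (b == b') && (val j == (val i).+1)
  | Some (inr (_, j)), None => val j == 0
  | _, _ => false
  end.

Definition hA (b : bool) (x : Vt) : nat :=
  match x with Some (inl (b', i)) => if b' == b then (val i).+1 else 0 | _ => 0 end.
Definition gP (b : bool) (x : Vt) : nat :=
  match x with Some (inr (b', j)) => if b' == b then (val j).+1 else 0 | _ => 0 end.

Lemma hA_pot b x y : step adjc x y -> hA b y <= (hA b x).+1.
Proof.
rewrite /step; case/orP; last by move/eqP->.
case: x => [[[b1 i]|[b1 i]]|]; case: y => [[[b2 j]|[b2 j]]|] //=.
- by case/andP=> /eqP <- /eqP ->; case: ifP.
- by move=> /eqP ->; case: ifP.
Qed.

Lemma gP_pot b x y : step adjc x y -> gP b x <= (gP b y).+1.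
Proof.
rewrite /step; case/orP; last by move/eqP->.
case: x => [[[b1 i]|[b1 i]]|]; case: y => [[[b2 j]|[b2 j]]|] //=.
- by case/andP=> /eqP <- /eqP ->; case: ifP.
- by move=> /eqP ->; case: ifP.
Qed.

Lemma reach_cA b i (Hi : i < r1) : reach adjc i.+1 None (Some (inl (b, Ordinal Hi)) : Vt).
Proof.
elim: i Hi => [|i IH] Hi.
  exists (Some (inl (b, Ordinal Hi))); split=> //; by rewrite /step /= eqxx.
have Hi' : i < r1 by apply: ltnW.
apply: (reach_snoc (IH Hi')).
by rewrite /step /= !eqxx.
Qed.

Lemma reach_Pc b j (Hj : j < r2) : reach adjc j.+1 (Some (inr (b, Ordinal Hj)) : Vt) None.
Proof.
elim: j Hj => [|j IH] Hj.
  exists None; split=> //; by rewrite /step /= eqxx.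
have Hj' : j < r2 by apply: ltnW.
exists (Some (inr (b, Ordinal Hj'))); split; last exact: IH.
by rewrite /step /= !eqxx.
Qed.

Lemma up_out (v : Vt) : exists k, k <= r1 /\ reach adjc k None v.
Proof.
case: v => [[[b [i Hi]]|[b [j Hj]]]|].
- by exists i.+1; split=> //; apply: reach_cA.
- exists 1; split=> //; exists (Some (inr (b, Ordinal Hj))); split=> //.
- by exists 0.
Qed.

Lemma up_in (v : Vt) : exists k, k <= r2 /\ reach adjc k v None.
Proof.
case: v => [[[b [i Hi]]|[b [j Hj]]]|].
- exists 1; split=> //; exists None; split=> //.
- by exists j.+1; split=> //; apply: reach_Pc.
- by exists 0.
Qed.


Definition lastA : 'I_r1 := Ordinal (etrans (ltn_predL r1) H1).
Definition lastP : 'I_r2 := Ordinal (etrans (ltn_predL r2) H2).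

Lemma reach_any (u v : Vt) : exists k, reach adjc k u v.
Proof.
case: (up_in u) => k [_ Hk]; case: (up_out v) => l [_ Hl].
exists (k + l); exact: reach_cat Hk Hl.
Qed.

Lemma low_out (u : Vt) : exists v : Vt, (exists k, reach adjc k u v) /\
  forall s : seq (dE (mkG adjc)), is_walk (G:=mkG adjc) u v s -> r1 <= size s.
Proof.
pose b := if u is Some (inl (b, _)) then ~~ b else true.
exists (Some (inl (b, lastA))); split; first exact: reach_any.
move=> s Hw; have := walk_pot (@hA_pot b) Hw.
have -> : hA b (Some (inl (b, lastA))) = r1 by rewrite /= eqxx prednK.
have -> : hA b u = 0.
  rewrite /b; case: u {Hw b} => [[[b' i]|[b' i]]|] //=.
  by case: b'.
by [].
Qed.

Lemma low_in (u : Vt) : exists v : Vt, (exists k, reach adjc k v u) /\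
  forall s : seq (dE (mkG adjc)), is_walk (G:=mkG adjc) v u s -> r2 <= size s.
Proof.
pose b := if u is Some (inr (b, _)) then ~~ b else true.
exists (Some (inr (b, lastP))); split; first exact: reach_any.
move=> s Hw; have := walk_pot_in (@gP_pot b) Hw.
have -> : gP b (Some (inr (b, lastP))) = r2 by rewrite /= eqxx prednK.
have -> : gP b u = 0.
  rewrite /b; case: u {Hw b} => [[[b' i]|[b' i]]|] //=.
  by case: b'.
by [].
Qed.

End Conc.

Theorem proposition2p5 (r1 r2 : nat) :
  0 < r1 -> 0 < r2 ->
  exists G : digraph,
    strongly_connected G /\ out_radius G r1 /\ in_radius G r2.
Proof.
move=> H1 H2; exists (mkG (@adjc r1 r2)); split; last split.
- apply: (@sc_of _ _ None).
  + by move=> v; case: (up_out H1 v) => k [_ Hk]; exists k.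
  + by move=> v; case: (up_in H2 v) => k [_ Hk]; exists k.
- apply: (@out_radius_of _ _ _ None); first exact: up_out H1.
  exact: low_out H1 H2.
- apply: (@in_radius_of _ _ _ None); first exact: up_in H2.
  exact: low_in H1 H2.
Qed.
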